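(* Let $0<T\le\infty$, and let $F,G\in C^2((0,T))\cap C^1([0,T))$ satisfy $F'(t)\ge0$ and $G(t)\ge 0$ for all $t$. Suppose that for all $t\in(0,T)$, $$F''(t)\ge A(t+1)^{-\alpha}G(t)^q,\qquad G''(t)\ge B(t+1)^{-\beta}F'(t)^p,$$ where $A,B>0$, $p,q>1$ and $\alpha,\beta\ge0$ are constants. Assume $G'(0)>0$. Assume also that there are constants $\kappa>0$, $a>0$ and $t_0\ge0$ such that $G(t)\ge\kappa t^a$ for all $t\in[t_0,T)$. If $$\max\{t_0,\ G(0)/G'(0),\ 1\}<T/2\qquad\text{and}\qquad \beta+\alpha p<p+2+a(pq-1),$$ then $$T\le C\,\kappa^{-\frac{pq-1}{p+2+a(pq-1)-(\beta+\alpha p)}},$$ where $C$ depends only on $A,B,p,q,\alpha,\beta,a$. *)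

(* Defs.v *)
From Stdlib Require Import Reals.
Open Scope R_scope.

(* Extended time horizon T in (0, +oo]: [Some T] is a finite T, [None] is +oo. *)
Definition extR := option R.

Definition lt_ext (t : R) (T : extR) : Prop :=
  match T with Some T' => t < T' | None => True end.

Definition lt_half_ext (x : R) (T : extR) : Prop :=
  match T with Some T' => x < T' / 2 | None => True end.

Definition le_ext (T : extR) (b : R) : Prop :=
  match T with Some T' => T' <= b | None => False end.

Definition pos_ext (T : extR) : Prop :=
  match T with Some T' => 0 < T' | None => True end.

Definition Ico0 (T : extR) (t : R) : Prop := 0 <= t /\ lt_ext t T.
Definition Ioo0 (T : extR) (t : R) : Prop := 0 < t /\ lt_ext t T.

(* Real power x^y for x >= 0, y > 0, with the convention 0^y = 0
   (Stdlib's Rpower only makes sense for x > 0). *)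
Definition rpow (x y : R) : R := if Rle_dec x 0 then 0 else Rpower x y.

Definition deriv_within (D : R -> Prop) (f : R -> R) (x l : R) : Prop :=
  limit1_in (fun y => (f y - f x) / (y - x)) (fun y => D y /\ y <> x) l x.

Definition cont_within (D : R -> Prop) (f : R -> R) (x : R) : Prop :=
  limit1_in f D (f x) x.

Definition C1_Ico_C2_Ioo (T : extR) (f f1 f2 : R -> R) : Prop :=
  (forall t, Ico0 T t -> deriv_within (Ico0 T) f t (f1 t)) /\
  (forall t, Ico0 T t -> cont_within (Ico0 T) f1 t) /\
  (forall t, Ioo0 T t -> derivable_pt_lim f1 t (f2 t)) /\
  (forall t, Ioo0 T t -> continuity_pt f2 t).

(* Main.v *)
Require Import Defs.
From Stdlib Require Import Reals Lra.
Open Scope R_scope.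

Lemma exp_le_mono x y : x <= y -> exp x <= exp y.
Proof. intros [H|H]; [left; apply exp_increasing; auto | subst; lra]. Qed.

Lemma exp_le_rev x y : exp x <= exp y -> x <= y.
Proof. intros H. destruct (Rle_or_lt x y) as [h|h]; auto.
  apply exp_increasing in h. lra. Qed.

Lemma ln_le_mono x y : 0 < x -> x <= y -> ln x <= ln y.
Proof. intros Hx [H|H]; [left; apply ln_increasing; auto | subst; lra]. Qed.

Lemma lt_ext_mono t t' T : t <= t' -> lt_ext t' T -> lt_ext t T.
Proof. destruct T; simpl; auto; lra. Qed.

Lemma Ioo0_between T u v c : Ioo0 T u -> Ioo0 T v -> u <= c <= v -> Ioo0 T c.
Proof. intros [H1 H2] [H3 H4] [H5 H6]. split; [lra|]. eapply lt_ext_mono; eauto. Qed.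

Lemma rpow_pos x y : 0 < x -> rpow x y = Rpower x y.
Proof. intros H. unfold rpow. destruct (Rle_dec x 0); [lra|auto]. Qed.

Lemma rpow_nonneg x y : 0 <= rpow x y.
Proof. unfold rpow. destruct (Rle_dec x 0); [lra|]. unfold Rpower. left; apply exp_pos. Qed.

Lemma rpow_mono x y c : 0 <= c -> 0 < x <= y -> rpow x c <= rpow y c.
Proof. intros Hc [Hx Hy]. rewrite !rpow_pos by lra. apply Rle_Rpower_l; lra. Qed.

Lemma Rpower_neg_mono x y al : 0 <= al -> 0 < x <= y -> Rpower y (- al) <= Rpower x (- al).
Proof. intros Ha [Hx Hy]. unfold Rpower. apply exp_le_mono.
  assert (ln x <= ln y) by (apply ln_le_mono; lra). nra. Qed.

Lemma Rpower_pos' x y : 0 < Rpower x y.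
Proof. unfold Rpower; apply exp_pos. Qed.

Lemma rpow_exp x y : rpow (exp x) y = exp (y * x).
Proof. rewrite rpow_pos by apply exp_pos. unfold Rpower. rewrite ln_exp. auto. Qed.

Lemma mvt_lower f f' u v c0 : u <= v ->
  (forall c, u <= c <= v -> derivable_pt_lim f c (f' c)) ->
  (forall c, u < c < v -> c0 <= f' c) -> f v - f u >= c0 * (v - u).
Proof.
  intros [Huv|Huv] Hd Hb.
  - destruct (MVT_cor2 f f' u v Huv Hd) as [c [Hc1 Hc2]]. rewrite Hc1.
    specialize (Hb c Hc2). apply Rle_ge. apply Rmult_le_compat_r; lra.
  - subst. lra.
Qed.

Lemma interior_nbhd T x : Ioo0 T x -> exists eta, 0 < eta /\
  forall y, Rabs (y - x) < eta -> Ioo0 T y.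
Proof.
  intros [H1 H2]. destruct T as [T'|]; simpl in H2.
  - exists (Rmin x (T' - x)). split. apply Rmin_pos; lra.
    intros y Hy. pose proof (Rmin_l x (T'-x)). pose proof (Rmin_r x (T'-x)).
    apply Rabs_def2 in Hy. split; simpl; lra.
  - exists x. split; auto. intros y Hy. apply Rabs_def2 in Hy. split; simpl; auto; lra.
Qed.

Lemma deriv_interior T f x l : Ioo0 T x -> deriv_within (Ico0 T) f x l ->
  derivable_pt_lim f x l.
Proof.
  intros Hx Hd eps He. destruct (Hd eps He) as [alp [Ha Hf]].
  destruct (interior_nbhd T x Hx) as [eta [He1 He2]].
  assert (Hp : 0 < Rmin alp eta) by (apply Rmin_pos; lra).
  exists (mkposreal _ Hp). intros h Hh0 Hh. simpl in Hh.
  pose proof (Rmin_l alp eta). pose proof (Rmin_r alp eta).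
  assert (Hy : Ioo0 T (x + h)) by (apply He2; replace (x + h - x) with h by ring; lra).
  specialize (Hf (x + h)). simpl in Hf. unfold Rdist in Hf.
  replace (x + h - x) with h in Hf by ring.
  apply Hf. split; [|lra]. split; [destruct Hy; split; [lra|auto]|]. intro Hc. apply Hh0; lra.
Qed.

Lemma mono_interior T f f' u v :
  (forall c, Ioo0 T c -> derivable_pt_lim f c (f' c)) ->
  (forall c, Ioo0 T c -> 0 <= f' c) ->
  Ioo0 T u -> Ioo0 T v -> u <= v -> f u <= f v.
Proof.
  intros Hd Hp Hu Hv Huv.
  assert (H := mvt_lower f f' u v 0 Huv (fun c Hc => Hd c (Ioo0_between T u v c Hu Hv Hc))
     (fun c Hc => Hp c (Ioo0_between T u v c Hu Hv ltac:(lra)))). lra.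
Qed.

Lemma G1_pos T G1 G2 :
  (forall c, Ioo0 T c -> derivable_pt_lim G1 c (G2 c)) ->
  (forall c, Ioo0 T c -> 0 <= G2 c) ->
  cont_within (Ico0 T) G1 0 -> G1 0 > 0 ->
  forall t, Ioo0 T t -> 0 <= G1 t.
Proof.
  intros Hd Hp Hc H0 t Ht.
  destruct (Rle_or_lt (G1 0) (G1 t)) as [h|h]; [lra|exfalso].
  destruct (Hc (G1 0 - G1 t) ltac:(lra)) as [alp [Ha Hf]].
  destruct Ht as [Ht1 Ht2].
  set (u := Rmin (alp/2) t).
  assert (Hu1 : 0 < u) by (apply Rmin_pos; lra).
  assert (Hu2 : u <= t) by (unfold u; apply Rmin_r).
  assert (Hu3 : u <= alp/2) by (unfold u; apply Rmin_l).
  assert (Hiu : Ioo0 T u) by (split; [lra| apply (lt_ext_mono u t T Hu2 Ht2)]).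
  assert (Hle : G1 u <= G1 t) by (eapply mono_interior; eauto; split; auto).
  specialize (Hf u). simpl in Hf. unfold Rdist in Hf.
  assert (Hd' : Rabs (G1 u - G1 0) < G1 0 - G1 t).
  { apply Hf. split. destruct Hiu; split; [lra|auto]. rewrite Rminus_0_r, Rabs_right; lra. }
  apply Rabs_def2 in Hd'. lra.
Qed.

Lemma step T F1 F2 G G1 G2 A B p q alpha beta t1 s delta M :
  0 < A -> 0 < B -> 0 < p -> 0 < q -> 0 <= alpha -> 0 <= beta -> 0 < t1 ->
  (forall c, Ioo0 T c -> derivable_pt_lim F1 c (F2 c)) ->
  (forall c, Ioo0 T c -> derivable_pt_lim G1 c (G2 c)) ->
  (forall c, Ioo0 T c -> derivable_pt_lim G c (G1 c)) ->
  (forall c, Ioo0 T c -> 0 <= F1 c) ->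
  (forall c, Ioo0 T c -> 0 <= G1 c) ->
  (forall t, Ioo0 T t -> F2 t >= A * Rpower (t + 1) (- alpha) * rpow (G t) q) ->
  (forall t, Ioo0 T t -> G2 t >= B * Rpower (t + 1) (- beta) * rpow (F1 t) p) ->
  (forall c, s <= c <= s + delta -> Ioo0 T c /\ c + 1 <= 3 * t1) ->
  0 < delta -> 0 < M -> M <= G s ->
  G (s + delta) >= M + B * Rpower (3 * t1) (- beta) *
     rpow (A * Rpower (3 * t1) (- alpha) * rpow M q * (delta / 3)) p * (delta/3) * (delta/3).
Proof.
  intros HA HB Hp Hq Hal Hbe Ht1 HdF HdG1 HdG HF1 HG1 HF2 HG2 Hwin Hdel HM HMs.
  assert (Hin : forall c, s <= c <= s + delta -> Ioo0 T c) by (intros; apply Hwin; auto).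
  assert (Gmono : forall u v, s <= u -> u <= v -> v <= s + delta -> G u <= G v).
  { intros u v H1 H2 H3. eapply mono_interior; eauto; apply Hin; lra. }
  set (c1 := A * Rpower (3 * t1) (- alpha)).
  assert (Hc1 : 0 < c1) by (apply Rmult_lt_0_compat; auto; apply Rpower_pos').
  set (P := rpow M q).
  assert (HP : 0 < P) by (unfold P; rewrite rpow_pos by lra; apply Rpower_pos').
  assert (S1 : forall t, s <= t <= s + delta -> F1 t >= c1 * P * (t - s)).
  { intros t Ht.
    assert (H := mvt_lower F1 F2 s t (c1 * P) ltac:(lra)
      (fun c Hc => HdF c (Hin c ltac:(lra)))).
    assert (HF1s : 0 <= F1 s) by (apply HF1; apply Hin; lra).
    enough (forall c, s < c < t -> c1 * P <= F2 c) by (specialize (H H0); lra).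
    intros c Hc. assert (Hic := Hin c ltac:(lra)). specialize (HF2 c Hic).
    assert (E1 : Rpower (3 * t1) (- alpha) <= Rpower (c + 1) (- alpha)).
    { apply Rpower_neg_mono; auto. pose proof (proj1 Hic). split; [lra| apply (proj2 (Hwin c ltac:(lra)))]. }
    assert (E2 : P <= rpow (G c) q).
    { unfold P. apply rpow_mono; [lra|]. split; auto. apply Rle_trans with (G s); auto.
      apply Gmono; lra. }
    unfold c1. pose proof (Rpower_pos' (3*t1) (-alpha)).
    apply Rge_le in HF2. eapply Rle_trans; [|apply HF2].
    rewrite Rmult_assoc, (Rmult_assoc A).
    apply Rmult_le_compat_l; [lra|]. apply Rmult_le_compat; lra. }
  set (h := c1 * P * (delta / 3)).
  assert (Hh : 0 < h) by (unfold h; apply Rmult_lt_0_compat; [apply Rmult_lt_0_compat|]; lra).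
  set (c2 := B * Rpower (3 * t1) (- beta)).
  assert (Hc2 : 0 < c2) by (apply Rmult_lt_0_compat; auto; apply Rpower_pos').
  set (Q := rpow h p).
  assert (HQ : 0 < Q) by (unfold Q; rewrite rpow_pos by lra; apply Rpower_pos').
  assert (S2 : forall t, s + delta/3 <= t <= s + delta -> G1 t >= c2 * Q * (t - (s + delta/3))).
  { intros t Ht.
    assert (H := mvt_lower G1 G2 (s + delta/3) t (c2 * Q) ltac:(lra)
      (fun c Hc => HdG1 c (Hin c ltac:(lra)))).
    assert (HG1s : 0 <= G1 (s + delta/3)) by (apply HG1; apply Hin; lra).
    enough (forall c, s + delta/3 < c < t -> c2 * Q <= G2 c) by (specialize (H H0); lra).
    intros c Hc. assert (Hic := Hin c ltac:(lra)). specialize (HG2 c Hic).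
    assert (E1 : Rpower (3 * t1) (- beta) <= Rpower (c + 1) (- beta)).
    { apply Rpower_neg_mono; auto. pose proof (proj1 Hic). split; [lra| apply (proj2 (Hwin c ltac:(lra)))]. }
    assert (E2 : Q <= rpow (F1 c) p).
    { unfold Q. apply rpow_mono; [lra|]. split; auto.
      specialize (S1 c ltac:(lra)). apply Rge_le in S1. eapply Rle_trans; [|apply S1].
      unfold h. apply Rmult_le_compat_l; [nra|lra]. }
    unfold c2. pose proof (Rpower_pos' (3*t1) (-beta)).
    apply Rge_le in HG2. eapply Rle_trans; [|apply HG2].
    rewrite Rmult_assoc, (Rmult_assoc B).
    apply Rmult_le_compat_l; [lra|]. apply Rmult_le_compat; lra. }
  assert (S3 := mvt_lower G G1 (s + 2*delta/3) (s + delta) (c2 * Q * (delta/3)) ltac:(lra)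
      (fun c Hc => HdG c (Hin c ltac:(lra)))).
  assert (H3 : forall c, s + 2*delta/3 < c < s + delta -> c2 * Q * (delta/3) <= G1 c).
  { intros c Hc. specialize (S2 c ltac:(lra)). apply Rge_le in S2. eapply Rle_trans; [|apply S2].
    apply Rmult_le_compat_l; nra. }
  specialize (S3 H3).
  assert (G s <= G (s + 2*delta/3)) by (apply Gmono; lra).
  fold c1 P h c2 Q.
  replace (s + delta - (s + 2 * delta / 3)) with (delta/3) in S3 by field. lra.
Qed.

Lemma stuff_eq A B p q alpha beta t1 m d : 0 < A -> 0 < B -> 0 < t1 ->
  B * Rpower (3 * t1) (- beta) *
     rpow (A * Rpower (3 * t1) (- alpha) * rpow (exp m) q * (exp d / 3)) p * (exp d/3) * (exp d/3)
  = exp (ln B - beta*(ln 3 + ln t1) + p*(ln A - alpha*(ln 3 + ln t1) + q*m + d - ln 3) + 2*(d - ln 3)).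
Proof.
  intros HA HB Ht.
  assert (Hl : ln (3 * t1) = ln 3 + ln t1) by (apply ln_mult; lra).
  assert (Hi : A * Rpower (3 * t1) (- alpha) * rpow (exp m) q * (exp d / 3)
     = exp (ln A - alpha*(ln 3 + ln t1) + q*m + d - ln 3)).
  { replace (ln A - alpha*(ln 3 + ln t1) + q*m + d - ln 3) with
      (ln A + (- alpha * ln (3 * t1)) + (q*m) + d + (- ln 3)) by (rewrite Hl; ring).
    rewrite !exp_plus, exp_Ropp, !exp_ln by lra. rewrite rpow_exp. unfold Rpower. field. }
  rewrite Hi, rpow_exp.
  set (X := ln A - alpha * (ln 3 + ln t1) + q * m + d - ln 3).
  replace (ln B - beta * (ln 3 + ln t1) + p * X + 2 * (d - ln 3)) with
    (ln B + (- beta * ln (3 * t1)) + (p * X) + d + d + (- ln 3) + (- ln 3)) by (rewrite Hl; ring).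
  rewrite !exp_plus, !exp_Ropp, !exp_ln by lra. unfold Rpower. field.
Qed.

Fixpoint sq (t1 : R) (f : nat -> R) (n : nat) : R :=
  match n with O => t1 | S n => sq t1 f n + f n end.

Definition rho (p q : R) := exp (- ((p*q-1) * ln 2 / (p+2))).
Definition EE p q a al be := p + 2 + a*(p*q-1) - (be + al*p).
Definition WW A B p q al be :=
  -(ln B + p * ln A) + (be + al*p + p + 2) * ln 3 - (p+2) * ln (1 - rho p q).

Lemma core (A B p q alpha beta a : R) :
    0 < A -> 0 < B -> 1 < p -> 1 < q -> 0 <= alpha -> 0 <= beta -> 0 < a ->
    0 < EE p q a alpha beta ->
  forall (T : extR) (F1 F2 G G1 G2 : R -> R) (kappa t0 t1 : R),
    (forall c, Ioo0 T c -> derivable_pt_lim F1 c (F2 c)) ->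
    (forall c, Ioo0 T c -> derivable_pt_lim G1 c (G2 c)) ->
    (forall c, Ioo0 T c -> derivable_pt_lim G c (G1 c)) ->
    (forall c, Ioo0 T c -> 0 <= F1 c) ->
    (forall c, Ioo0 T c -> 0 <= G1 c) ->
    (forall t, Ioo0 T t -> F2 t >= A * Rpower (t + 1) (- alpha) * rpow (G t) q) ->
    (forall t, Ioo0 T t -> G2 t >= B * Rpower (t + 1) (- beta) * rpow (F1 t) p) ->
    0 < kappa ->
    (forall t, t0 <= t -> lt_ext t T -> G t >= kappa * rpow t a) ->
    t0 <= t1 -> 1 <= t1 ->
    exp (WW A B p q alpha beta / EE p q a alpha beta) *
      Rpower kappa (- ((p * q - 1) / EE p q a alpha beta)) < t1 ->
    (forall t, t < 2 * t1 -> lt_ext t T) -> False.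
Proof.
  intros HA HB Hp Hq Hal Hbe Ha HE T F1 F2 G G1 G2 kappa t0 t1
    HdF HdG1 HdG HF1 HG1 HF2 HG2 Hk HGk Ht01 Ht1 Hbig Hwin.
  set (E := EE p q a alpha beta) in *.
  set (W := WW A B p q alpha beta) in *.
  set (L := ln t1). set (k := ln kappa). set (l3 := ln 3). set (l2 := ln 2).
  assert (Hl2 : 0 < l2) by (unfold l2; rewrite <- ln_1; apply ln_increasing; lra).
  assert (Hr : 0 < p * q - 1) by nra.
  assert (Ht1e : t1 = exp L) by (unfold L; rewrite exp_ln; lra).
  assert (Hke : kappa = exp k) by (unfold k; rewrite exp_ln; lra).
  assert (HL : W / E - (p*q-1)/E * k < L).
  { apply exp_lt_inv. rewrite <- Ht1e.
    replace (exp (W / E - (p * q - 1) / E * k)) with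
      (exp (W / E) * Rpower kappa (- ((p * q - 1) / E))); [exact Hbig|].
    unfold Rpower, Rminus. rewrite exp_plus. f_equal. f_equal. unfold k; ring. }
  assert (HEL : W - (p*q-1) * k < E * L).
  { assert (0 < E * (L - (W / E - (p*q-1)/E * k))) by (apply Rmult_lt_0_compat; lra).
    replace (E * (L - (W / E - (p * q - 1) / E * k))) with (E*L - (W - (p*q-1)*k)) in H
      by (field; lra). lra. }
  set (c := (p*q-1) * l2 / (p+2)).
  assert (Hc : 0 < c) by (unfold c; apply Rdiv_lt_0_compat; nra).
  set (rh := rho p q).
  assert (Hrh : rh = exp (- c)) by reflexivity.
  assert (Hrh0 : 0 < rh) by (rewrite Hrh; apply exp_pos).
  assert (Hrh1 : rh < 1) by (rewrite Hrh, <- exp_0; apply exp_increasing; lra).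
  set (m0 := k + a * L).
  set (m := fun N : nat => m0 + INR N * l2).
  set (d := fun N : nat => (m N - ln B + beta*(l3+L) - p*(ln A - alpha*(l3+L) + q * m N - l3) + 2*l3)/(p+2)).
  assert (Hphi : forall N, ln B - beta*(ln 3 + ln t1) + p*(ln A - alpha*(ln 3 + ln t1) + q*(m N) + d N - ln 3) + 2*(d N - ln 3) = m N).
  { intros N. fold l3 L. unfold d. field. lra. }
  assert (HdS : forall N, d (S N) = d N - c).
  { intros N. unfold d, m, c. rewrite S_INR. field. lra. }
  set (dl := fun N => exp (d N)).
  assert (Hdl : forall N, 0 < dl N) by (intros; apply exp_pos).
  assert (HdlS : forall N, dl (S N) = dl N * rh).
  { intros N. unfold dl. rewrite HdS, Hrh. unfold Rminus. apply exp_plus. }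
  assert (Hd0 : d 0%nat < ln (1 - rh) + L).
  { assert (ln (1 - rh) + L - d 0%nat = (E * L - W + (p*q-1) * k) / (p+2)).
    { unfold d, m, m0, E, W, EE, WW. fold rh. fold l3. simpl INR. field. lra. }
    assert (0 < (E * L - W + (p*q-1) * k) / (p+2)) by (apply Rdiv_lt_0_compat; lra). lra. }
  assert (Hdl0 : dl 0%nat < (1 - rh) * t1).
  { unfold dl. rewrite Ht1e. rewrite <- (exp_ln (1 - rh)) by lra.
    rewrite <- exp_plus. apply exp_increasing. exact Hd0. }
  set (ts := t1 + dl 0%nat / (1 - rh)).
  assert (Hts : ts < 2 * t1).
  { unfold ts. assert (dl 0%nat / (1 - rh) < t1). 
    { apply (Rmult_lt_reg_r (1 - rh)); [lra|]. unfold Rdiv. rewrite Rmult_assoc, Rinv_l by lra. lra. }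
    lra. }
  set (s := sq t1 dl).
  assert (Hinv : forall N, s N + dl N / (1 - rh) = ts).
  { induction N as [|N IH]; [reflexivity|].
    unfold s in *; simpl. rewrite HdlS. rewrite <- IH. field. lra. }
  assert (Hsge : forall N, t1 <= s N).
  { induction N as [|N IH]; unfold s in *; simpl; [lra|]. pose proof (Hdl N). lra. }
  assert (Hsle : forall N, s N + dl N <= ts).
  { intros N. rewrite <- (Hinv N).
    assert (0 <= dl N / (1 - rh) - dl N).
    { replace (dl N / (1 - rh) - dl N) with (dl N * rh / (1 - rh)) by (field; lra).
      apply Rlt_le, Rdiv_lt_0_compat; [apply Rmult_lt_0_compat; auto|lra]. }
    lra. }
  assert (Hint : forall x, t1 <= x <= ts -> Ioo0 T x /\ x + 1 <= 3 * t1).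
  { intros x Hx. split; [split; [lra| apply Hwin; lra] | lra]. }
  assert (Hclaim : forall N, exp (m N) <= G (s N)).
  { induction N as [|N IH].
    - unfold s; simpl. assert (Hg := HGk t1 Ht01 (Hwin t1 ltac:(lra))).
      replace (rpow t1 a) with (exp (a * L)) in Hg by (unfold L; rewrite rpow_pos by lra; reflexivity). rewrite Hke in Hg.
      unfold m, m0. simpl INR. rewrite Rmult_0_l, Rplus_0_r, exp_plus. lra.
    - assert (Hst := step T F1 F2 G G1 G2 A B p q alpha beta t1 (s N) (dl N) (exp (m N))
        HA HB ltac:(lra) ltac:(lra) Hal Hbe ltac:(lra) HdF HdG1 HdG HF1 HG1 HF2 HG2
        ltac:(intros x Hx; apply Hint; pose proof (Hsge N); pose proof (Hsle N); lra)
        (Hdl N) (exp_pos _) IH).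
      unfold dl at 2 3 4 in Hst. rewrite stuff_eq in Hst by lra. rewrite Hphi in Hst.
      unfold s in *; simpl. fold s.
      replace (m (S N)) with (m N + l2) by (unfold m; rewrite S_INR; ring).
      rewrite exp_plus. unfold l2. rewrite exp_ln by lra. change (sq t1 dl N) with (s N) in Hst. lra. }
  assert (Hfin : forall N, exp (m N) <= G ts).
  { intros N. eapply Rle_trans; [apply Hclaim|].
    eapply mono_interior; [apply HdG|apply HG1| | |].
    - apply Hint. pose proof (Hsge N); pose proof (Hsle N); pose proof (Hdl N); lra.
    - apply Hint. pose proof (Hsge N); pose proof (Hsle N); pose proof (Hdl N); lra.
    - pose proof (Hsle N); pose proof (Hdl N); lra. }
  assert (HGts : 0 < G ts) by (eapply Rlt_le_trans; [apply exp_pos|apply (Hfin 0%nat)]).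
  destruct (INR_archimed l2 (ln (G ts) - m0) Hl2) as [N HN].
  specialize (Hfin N). rewrite <- (exp_ln (G ts)) in Hfin by lra.
  apply exp_le_rev in Hfin. unfold m in Hfin. lra.
Qed.

Theorem lemma2p1 :
  forall (A B p q alpha beta a : R),
    0 < A -> 0 < B -> 1 < p -> 1 < q -> 0 <= alpha -> 0 <= beta -> 0 < a ->
    beta + alpha * p < p + 2 + a * (p * q - 1) ->
  exists C : R,
  forall (T : extR) (F F1 F2 G G1 G2 : R -> R) (kappa t0 : R),
    pos_ext T ->
    C1_Ico_C2_Ioo T F F1 F2 ->
    C1_Ico_C2_Ioo T G G1 G2 ->
    (forall t, Ico0 T t -> 0 <= F1 t) ->
    (forall t, Ico0 T t -> 0 <= G t) ->
    (forall t, Ioo0 T t ->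
       F2 t >= A * Rpower (t + 1) (- alpha) * rpow (G t) q) ->
    (forall t, Ioo0 T t ->
       G2 t >= B * Rpower (t + 1) (- beta) * rpow (F1 t) p) ->
    G1 0 > 0 ->
    0 < kappa -> 0 <= t0 ->
    (forall t, t0 <= t -> lt_ext t T -> G t >= kappa * rpow t a) ->
    lt_half_ext (Rmax t0 (Rmax (G 0 / G1 0) 1)) T ->
    le_ext T
      (C * Rpower kappa
             (- ((p * q - 1) / (p + 2 + a * (p * q - 1) - (beta + alpha * p))))).
Proof.
  intros A B p q alpha beta a HA HB Hp Hq Hal Hbe Ha Hcond.
  assert (HE : 0 < EE p q a alpha beta) by (unfold EE; lra).
  exists (2 * exp (WW A B p q alpha beta / EE p q a alpha beta)).
  intros T F F1 F2 G G1 G2 kappa t0 HT HFc HGc HF1 HG HF2 HG2 HG10 Hk Ht0 HGk Hhalf.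
  destruct HFc as [_ [_ [HdF _]]]. destruct HGc as [HdG0 [HcG1 [HdG1 _]]].
  assert (IooIco : forall c, Ioo0 T c -> Ico0 T c) by (intros c [H1 H2]; split; [lra|auto]).
  assert (HdG : forall c, Ioo0 T c -> derivable_pt_lim G c (G1 c)).
  { intros c Hc. apply (deriv_interior T); auto. }
  assert (HF1' : forall c, Ioo0 T c -> 0 <= F1 c) by auto.
  assert (HG2p : forall c, Ioo0 T c -> 0 <= G2 c).
  { intros c Hc. specialize (HG2 c Hc). pose proof (Rpower_pos' (c+1) (-beta)).
    pose proof (rpow_nonneg (F1 c) p). apply Rge_le in HG2. eapply Rle_trans; [|apply HG2].
    apply Rmult_le_pos; [|auto]. apply Rmult_le_pos; lra. }
  assert (Ico00 : Ico0 T 0) by (split; [lra| destruct T; simpl in *; auto]).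
  assert (HG1p := G1_pos T G1 G2 HdG1 HG2p (HcG1 0 Ico00) HG10).
  change (p + 2 + a * (p * q - 1) - (beta + alpha * p)) with (EE p q a alpha beta).
  set (X := exp (WW A B p q alpha beta / EE p q a alpha beta) *
      Rpower kappa (- ((p * q - 1) / EE p q a alpha beta))).
  assert (HX : 0 < X) by (unfold X; apply Rmult_lt_0_compat; [apply exp_pos|apply Rpower_pos']).
  replace (2 * exp (WW A B p q alpha beta / EE p q a alpha beta) *
      Rpower kappa (- ((p * q - 1) / EE p q a alpha beta))) with (2 * X) by (unfold X; ring).
  destruct T as [T'|].
  - simpl. destruct (Rle_or_lt T' (2 * X)) as [h|h]; [auto|exfalso].
    simpl in Hhalf.
    pose proof (Rmax_l t0 (Rmax (G 0 / G1 0) 1)).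
    pose proof (Rmax_r t0 (Rmax (G 0 / G1 0) 1)).
    pose proof (Rmax_r (G 0 / G1 0) 1).
    apply (core A B p q alpha beta a HA HB Hp Hq Hal Hbe Ha HE (Some T') F1 F2 G G1 G2 kappa t0 (T'/2)
      HdF HdG1 HdG HF1' HG1p HF2 HG2 Hk HGk); try lra.
    + fold X. lra.
    + intros t Ht. simpl. lra.
  - simpl. apply (core A B p q alpha beta a HA HB Hp Hq Hal Hbe Ha HE None F1 F2 G G1 G2 kappa t0
      (Rmax t0 1 + X + 1) HdF HdG1 HdG HF1' HG1p HF2 HG2 Hk HGk).
    + pose proof (Rmax_l t0 1). lra.
    + pose proof (Rmax_r t0 1). lra.
    + fold X. pose proof (Rmax_r t0 1). lra.
    + intros; simpl; auto.
Qed.
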